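(* Let $H$ be a locally compact abelian group, $X$ a compact metric space and $\sigma=(\sigma_1,\dots,\sigma_k)$ a $k$-tuple of pairwise commuting surjective local homeomorphisms of $X$. Give $A=C(X,H)$ the $\mathbb{N}^k$-module structure $(n f)(x)=f(\sigma^n(x))$. Then the map $\Phi:Z^1(\mathbb{N}^k,A)\to Z^1_{\mathrm{cont}}(\mathcal{G}(X,\sigma),H)$ sending a semigroup cocycle $c$ to the unique continuous groupoid $1$-cocycle $\Phi(c)$ with $\Phi(c)(x,\mathbf{e}_i,\sigma_i(x))=c(\mathbf{e}_i)(x)$ for all $i$ and $x$ (explicitly $\Phi(c)(x,m-n,y)=c(m)(x)-c(n)(y)$ whenever $\sigma^m(x)=\sigma^n(y)$) is a well-defined group isomorphism, it restricts to an isomorphism $B^1(\mathbb{N}^k,A)\cong B^1_{\mathrm{cont}}(\mathcal{G}(X,\sigma),H)$, and hence induces an isomorphism $H^1(\mathbb{N}^k,C(X,H))\cong H^1_{\mathrm{cont}}(\mathcal{G}(X,\sigma),H)$.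
   Context: For $n\in\mathbb{N}^k$, $\sigma^n=\sigma_1^{n_1}\circ\cdots\circ\sigma_k^{n_k}$. Semigroup cohomology: $Z^1(\mathbb{N}^k,A)=\{\gamma:\mathbb{N}^k\to A\mid \gamma(m+n)=\gamma(m)+m\gamma(n)\}$, $B^1(\mathbb{N}^k,A)=\{n\mapsto \alpha-n\alpha : \alpha\in A\}$, $H^1=Z^1/B^1$. The groupoid $\mathcal{G}(X,\sigma)=\{(x,p-q,y): p,q\in\mathbb{N}^k,\ \sigma^p(x)=\sigma^q(y)\}$ with $(x,m,y)(y,n,z)=(x,m+n,z)$, $r(x,n,y)=x$, $s(x,n,y)=y$, and topology with basis $U\times\{p-q\}\times V$ ($U,V$ open, $\sigma^p(U)=\sigma^q(V)$). $Z^1_{\mathrm{cont}}(\mathcal{G},H)$ is the group of continuous homomorphisms $\mathcal{G}\to H$; $B^1_{\mathrm{cont}}(\mathcal{G},H)$ consists of those of the form $\gamma\mapsto f(r(\gamma))-f(s(\gamma))$ with $f\in C(X,H)$; $H^1_{\mathrm{cont}}=Z^1_{\mathrm{cont}}/B^1_{\mathrm{cont}}$. *)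

(* Defs.v *)
From HB Require Import structures.
From mathcomp Require Import all_boot all_order all_algebra.
From mathcomp Require Import all_classical all_reals all_analysis.

Set Implicit Arguments.
Unset Strict Implicit.
Unset Printing Implicit Defensive.
Import Order.TTheory GRing.Theory Num.Theory.

Local Open Scope classical_set_scope.
Local Open Scope ring_scope.

(* Semigroup cochains N^k -> A, where A = C(X,H) (continuity imposed in Z1) *)
Definition cochain (X : Type) (H : Type) (k : nat) := ('I_k -> nat) -> X -> H.

Section Defs.
Context {X : Type} {H : zmodType} {k : nat} (s : 'I_k -> X -> X).

Definition spow (n : 'I_k -> nat) : X -> X :=
  foldr (fun i f => iter (n i) (s i) \o f) id (enum 'I_k).

Definition addv (m n : 'I_k -> nat) : 'I_k -> nat := fun i => (m i + n i)%N.
Definition unitv (i : 'I_k) : 'I_k -> nat := fun j => nat_of_bool (j == i).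
Definition zerov : 'I_k -> nat := fun _ => 0%N.
Definition diffv (p q : 'I_k -> nat) : 'I_k -> int := fun i => (p i)%:Z - (q i)%:Z.
Definition addz (m n : 'I_k -> int) : 'I_k -> int := fun i => m i + n i.

Definition inG (g : X * ('I_k -> int) * X) : Prop :=
  exists p q : 'I_k -> nat, g.1.2 = diffv p q /\ spow p g.1.1 = spow q g.2.

Definition Gpd := {g : X * ('I_k -> int) * X | inG g}.

Definition gr (g : Gpd) : X := (sval g).1.1.
Definition gdeg (g : Gpd) : 'I_k -> int := (sval g).1.2.
Definition gs (g : Gpd) : X := (sval g).2.


Definition cocycle_eq (c : cochain X H k) : Prop :=
  forall m n x, c (addv m n) x = c m x + c n (spow m x).

Definition gpd_hom (phi : Gpd -> H) : Prop :=
  forall g h gh : Gpd, gs g = gr h ->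
    sval gh = (gr g, addz (gdeg g) (gdeg h), gs h) ->
    phi gh = phi g + phi h.
End Defs.

Section TopDefs.
Context {X : topologicalType} {H : topologicalType} {k : nat} (s : 'I_k -> X -> X).

Definition local_homeo (f : X -> X) : Prop :=
  continuous f /\
  forall x, exists U : set X, [/\ open U, U x,
    (forall a b, U a -> U b -> f a = f b -> a = b) &
    (forall V : set X, open V -> V `<=` U -> open (f @` V))].

Definition Zbasic (U V : set X) (p q : 'I_k -> nat) : set (X * ('I_k -> int) * X) :=
  [set t | [/\ U t.1.1, V t.2, t.1.2 = diffv p q & spow s p t.1.1 = spow s q t.2]].

Definition basic_open (W : set (X * ('I_k -> int) * X)) : Prop :=
  exists (U V : set X) (p q : 'I_k -> nat),
    [/\ open U, open V, spow s p @` U = spow s q @` V & W = Zbasic U V p q].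

Definition gpd_continuous (phi : Gpd s -> H) : Prop :=
  forall (g : Gpd s) (W : set H), open W -> W (phi g) ->
    exists B, [/\ basic_open B, B (sval g) &
      forall h : Gpd s, B (sval h) -> W (phi h)].
End TopDefs.

Section Cohom.
Context {X : topologicalType} {H : topologicalZmodType} {k : nat} (s : 'I_k -> X -> X).

Definition Z1 : set (cochain X H k) :=
  [set c | (forall n, continuous (c n)) /\ cocycle_eq s c].

Definition B1 : set (cochain X H k) :=
  [set c | exists alpha : X -> H, continuous alpha /\
     forall n x, c n x = alpha x - alpha (spow s n x)].

Definition Z1cont : set (Gpd s -> H) :=
  [set phi | gpd_hom phi /\ gpd_continuous phi].

Definition B1cont : set (Gpd s -> H) :=
  [set phi | exists f : X -> H, continuous f /\
     forall g, phi g = f (gr g) - f (gs g)].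

Definition on_generators (phi : Gpd s -> H) (c : cochain X H k) : Prop :=
  forall (g : Gpd s) (i : 'I_k) (x : X),
    sval g = (x, diffv (unitv i) zerov, s i x) -> phi g = c (unitv i) x.

Definition explicit_formula (phi : Gpd s -> H) (c : cochain X H k) : Prop :=
  forall (g : Gpd s) (m n : 'I_k -> nat),
    gdeg g = diffv m n -> spow s m (gr g) = spow s n (gs g) ->
    phi g = c m (gr g) - c n (gs g).
End Cohom.

Definition addc {X : Type} {H : zmodType} {k : nat} (c c' : cochain X H k) : cochain X H k :=
  fun n x => c n x + c' n x.
Definition subc {X : Type} {H : zmodType} {k : nat} (c c' : cochain X H k) : cochain X H k :=
  fun n x => c n x - c' n x.

(* Main.v *)
From Pilot Require Import Defs.
From HB Require Import structures.
From mathcomp Require Import all_boot all_order all_algebra.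
From mathcomp Require Import all_classical all_reals all_analysis.
Import GRing.Theory.
Local Open Scope classical_set_scope.

Set Implicit Arguments.
Unset Strict Implicit.

Notation vadd := Pilot.Defs.addv.
Notation vdiff := Pilot.Defs.diffv.
Section Alg.
Variables (X : Type) (k : nat) (s : 'I_k -> X -> X).
Hypothesis scomm : forall i j, s i \o s j = s j \o s i.

Definition Fl (l : seq 'I_k) (n : 'I_k -> nat) : X -> X :=
  foldr (fun i f => iter (n i) (s i) \o f) id l.

Lemma scommx i j x : s i (s j x) = s j (s i x).
Proof. exact: (congr1 (fun f => f x) (scomm i j)). Qed.

Lemma iter_commx (f g : X -> X) n : (forall x, f (g x) = g (f x)) ->
  forall x, iter n f (g x) = g (iter n f x).
Proof. move=> fg; elim: n => [|n IH] x //=; by rewrite IH fg. Qed.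

Lemma Fl_comm l n (h : X -> X) : (forall i x, s i (h x) = h (s i x)) ->
  forall x, Fl l n (h x) = h (Fl l n x).
Proof.
move=> sh; elim: l => [|i l IH] x //=.
by rewrite IH iter_commx.
Qed.

Lemma Fl_add l m n x : Fl l (vadd m n) x = Fl l m (Fl l n x).
Proof.
elim: l x => [|i l IH] x //=.
rewrite IH; change (vadd m n i) with (m i + n i)%N; rewrite iterD; congr (iter _ _ _).
rewrite (@Fl_comm l m (iter (n i) (s i))) // => j y; rewrite iter_commx // => z; exact: scommx.
Qed.

Lemma spow_add m n x : spow s (vadd m n) x = spow s m (spow s n x).
Proof. exact: Fl_add. Qed.

Lemma addvC (m n : 'I_k -> nat) : vadd m n = vadd n m.
Proof. by apply/funext => i; rewrite /Pilot.Defs.addv addnC. Qed.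

Lemma spow_comm m n x : spow s m (spow s n x) = spow s n (spow s m x).
Proof. by rewrite -!spow_add addvC. Qed.

Lemma spow_zero x : spow s zerov x = x.
Proof. rewrite /spow; elim: (enum 'I_k) => //= i l IH; by rewrite IH. Qed.

Lemma Fl_unit l i x : Fl l (unitv i) x = iter (count (pred1 i) l) (s i) x.
Proof.
elim: l x => [|j l IH] x //=.
rewrite IH /unitv /=; case: eqP => [->|] //=.
Qed.

Lemma spow_unit i x : spow s (unitv i) x = s i x.
Proof.
rewrite /spow -/(Fl _ _) Fl_unit.
rewrite (count_uniq_mem _ (enum_uniq _)) mem_enum //.
Qed.

End Alg.

From mathcomp Require Import zify.

Section Coc.
Variables (X : Type) (H : zmodType) (k : nat) (s : 'I_k -> X -> X).
Hypothesis scomm : forall i j, s i \o s j = s j \o s i.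
Local Open Scope ring_scope.

Implicit Types (c : cochain X H k) (p q m n r : 'I_k -> nat).

Lemma addv0 p : vadd zerov p = p.
Proof. by apply/funext => i. Qed.

Lemma c_zero c : cocycle_eq s c -> forall x, c zerov x = 0.
Proof.
move=> cc x; have := cc zerov zerov x; rewrite addv0 spow_zero => E.
by apply/esym/(addrI (c zerov x)); rewrite addr0 {1}E.
Qed.

Lemma diffv_add p q m n : vdiff p q = vdiff m n -> vadd p n = vadd m q.
Proof.
move=> E; apply/funext => i; have := congr1 (fun f => f i) E.
rewrite /Pilot.Defs.diffv /Pilot.Defs.addv /= => E'; lia.
Qed.

Lemma shift_eq c p q r x y : cocycle_eq s c -> spow s p x = spow s q y ->
  c p x - c q y = c (vadd p r) x - c (vadd q r) y.
Proof.
move=> cc E; rewrite !cc E.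
by rewrite opprD addrACA subrr addr0.
Qed.

Lemma WD c p q m n x y : cocycle_eq s c -> spow s p x = spow s q y ->
  spow s m x = spow s n y -> vdiff p q = vdiff m n ->
  c p x - c q y = c m x - c n y.
Proof.
move=> cc E1 E2 D.
rewrite (shift_eq n cc E1) (shift_eq q cc E2) (diffv_add D).
by rewrite (addvC q n).
Qed.

Lemma shift_valid p q r x y : spow s p x = spow s q y ->
  spow s (vadd p r) x = spow s (vadd q r) y.
Proof.
move=> E; rewrite !spow_add // (spow_comm scomm p r) (spow_comm scomm q r).
by rewrite E.
Qed.

Lemma inG_ex (g : Gpd s) : exists pq : ('I_k -> nat) * ('I_k -> nat),
  gdeg g = vdiff pq.1 pq.2 /\ spow s pq.1 (gr g) = spow s pq.2 (gs g).
Proof. case: g => [[[x d] y] [p [q [E1 E2]]]]; by exists (p, q). Qed.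

Definition rep (g : Gpd s) := sval (cid (inG_ex g)).
Lemma repP g : gdeg g = vdiff (rep g).1 (rep g).2 /\
   spow s (rep g).1 (gr g) = spow s (rep g).2 (gs g).
Proof. exact: (svalP (cid (inG_ex g))). Qed.

Definition PhiD c (g : Gpd s) : H := c (rep g).1 (gr g) - c (rep g).2 (gs g).

Lemma Phi_expl c : cocycle_eq s c -> forall (g : Gpd s) m n,
  gdeg g = vdiff m n -> spow s m (gr g) = spow s n (gs g) ->
  PhiD c g = c m (gr g) - c n (gs g).
Proof.
move=> cc g m n D E; case: (repP g) => D' E'.
rewrite /PhiD; apply: WD => //; by rewrite -D' -D.
Qed.

Definition mkG (x : X) p : Gpd s :=
  exist _ (x, vdiff p zerov, spow s p x)
    (ex_intro _ p (ex_intro _ zerov (conj erefl (esym (spow_zero s _))))).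

Lemma Phi_mkG c x p : cocycle_eq s c -> PhiD c (mkG x p) = c p x.
Proof.
move=> cc; rewrite (@Phi_expl c cc _ p zerov) //=; first by rewrite c_zero // subr0.
by rewrite spow_zero.
Qed.

Lemma Phi_hom c : cocycle_eq s c -> gpd_hom (PhiD c).
Proof.
move=> cc g h gh E Egh.
case: (repP g); set p := (rep g).1; set q := (rep g).2 => Dg Eg.
case: (repP h); set p' := (rep h).1; set q' := (rep h).2 => Dh Eh.
have grgh : gr gh = gr g by rewrite /gr Egh.
have gsgh : gs gh = gs h by rewrite /gs Egh.
have Dgh : gdeg gh = vdiff (vadd p p') (vadd q' q).
  rewrite /gdeg Egh /= -/(gdeg g) -/(gdeg h) Dg Dh.
  apply/funext => i; rewrite /addz /Pilot.Defs.diffv /Pilot.Defs.addv; lia.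
have V1 : spow s (vadd p p') (gr g) = spow s (vadd q p') (gs g)
  by apply: shift_valid.
have V2 : spow s (vadd p' q) (gr h) = spow s (vadd q' q) (gs h)
  by apply: shift_valid.
rewrite (@Phi_expl c cc gh (vadd p p') (vadd q' q)) //; last first.
  by rewrite grgh gsgh V1 E (addvC q p') V2.
rewrite (@Phi_expl c cc g (vadd p p') (vadd q p')) //; last first.
  rewrite Dg; apply/funext => i; rewrite /Pilot.Defs.diffv /Pilot.Defs.addv; lia.
rewrite (@Phi_expl c cc h (vadd p' q) (vadd q' q)) //; last first.
  rewrite Dh; apply/funext => i; rewrite /Pilot.Defs.diffv /Pilot.Defs.addv; lia.
by rewrite grgh gsgh E (addvC q p') addrA subrK.
Qed.

Definition cof (phi : Gpd s -> H) : cochain X H k := fun p x => phi (mkG x p).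

Lemma cof_cocycle phi : gpd_hom phi -> cocycle_eq s (cof phi).
Proof.
move=> hp m n x; rewrite /cof.
apply: (hp (mkG x m) (mkG (spow s m x) n)) => //=.
congr (_, _, _); last by rewrite spow_add // spow_comm.
apply/funext => i; rewrite /addz /gdeg /= /Pilot.Defs.diffv /Pilot.Defs.addv /zerov; lia.
Qed.

Lemma hom_rep phi (g : Gpd s) p q : gpd_hom phi ->
  gdeg g = vdiff p q -> spow s p (gr g) = spow s q (gs g) ->
  phi g = cof phi p (gr g) - cof phi q (gs g).
Proof.
move=> hp D E; rewrite /cof.
rewrite (hp g (mkG (gs g) q) (mkG (gr g) p)) //= ?addrK //.
congr (_, _, _); last by [].
by rewrite -/(gdeg g) D; apply/funext => i; rewrite /addz /gdeg /= /Pilot.Defs.diffv /zerov; lia.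
Qed.

Definition sz p := (\sum_(i < k) p i)%N.

Lemma le_sz p j : (p j <= sz p)%N.
Proof. by rewrite /sz (bigD1 j) //= leq_addr. Qed.

Lemma coc_unique c c' : cocycle_eq s c -> cocycle_eq s c' ->
  (forall i x, c (unitv i) x = c' (unitv i) x) -> forall p x, c p x = c' p x.
Proof.
move=> cc cc' cu p.
move: {2}(sz p) (leqnn (sz p)) => N; elim: N p => [|N IH] p hp x.
all: case: (pselect (exists i, (0 < p i)%N)) => [[i pi]|np]; last first.
all: try (have -> : p = zerov by apply/funext => j; apply/eqP; rewrite -leqn0 leqNgt; apply/negP => hj; apply: np; exists j);
  try (by rewrite !c_zero).
- by have := le_sz p i; lia.
set p' := fun j => (p j - unitv i j)%N.
have Ep : p = vadd (unitv i) p'.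
  apply/funext => j; rewrite /Pilot.Defs.addv /p' /unitv; case: eqP => [->|_] /=; lia.
have Sz : sz p = (sz p').+1.
  rewrite {1}Ep /sz /Pilot.Defs.addv big_split /= (bigD1 i) //= {1}/unitv eqxx big1 ?add1n ?addn0 //.
  by move=> j /negbTE; rewrite /unitv eq_sym => ->.
rewrite Ep !cc cu IH //; lia.
Qed.

End Coc.

Lemma sub_open (M : topologicalZmodType) (a b : M) (W : set M) : open W -> W (a - b)%R ->
  exists A B : set M, [/\ open A, A a, open B, B b & forall a' b', A a' -> B b' -> W (a' - b')%R].
Proof.
move=> oW Wab.
have h : nbhs (a - b)%R W by apply: open_nbhs_nbhs.
have := @sub_continuous M (a,b). move/(_ W h). rewrite /=. move=> [[A0 B0]] /= [nA nB] sub.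
move: nA nB; rewrite !nbhsE => -[A [oA Aa] AA0] [B [oB Bb] BB0].
exists A, B; split => // a' b' Aa' Bb'.
by apply: (sub (a', b')); split; [apply: AA0 | apply: BB0].
Qed.

Lemma preim_open (T U : topologicalType) (f : T -> U) (O : set U) :
  continuous f -> open O -> open (f @^-1` O).
Proof. by move=> /continuousP cf; apply: cf. Qed.

Lemma img_restr (T U : Type) (f : T -> U) (A : set T) (O : set U) :
  O `<=` f @` A -> f @` (A `&` f @^-1` O) = O.
Proof.
move=> OA; apply/seteqP; split.
  by move=> _ [y [_ Oy] <-].
move=> z Oz; have [y Ay fy] := OA z Oz; exists y => //; split => //.
by rewrite /preimage /= fy.
Qed.

Lemma gpd_eq (X : Type) (k : nat) (s : 'I_k -> X -> X) (g h : Gpd s) :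
  sval g = sval h -> g = h.
Proof.
case: g h => [a pa] [b pb] /= E; subst; congr exist; exact: Prop_irrelevance.
Qed.

Section Top.
Variables (X : topologicalType) (H : topologicalZmodType) (k : nat) (s : 'I_k -> X -> X).
Hypothesis scomm : forall i j, s i \o s j = s j \o s i.
Hypothesis slh : forall i, local_homeo (s i).
Local Open Scope ring_scope.

Definition lopen (f : X -> X) := continuous f /\ forall x, exists N : set X,
  [/\ open N, N x & forall V, open V -> V `<=` N -> open (f @` V)].

Lemma lopen_ext f g : (forall x, f x = g x) -> lopen f -> lopen g.
Proof. by move=> fg; have -> : g = f by apply/funext => x; rewrite fg. Qed.

Lemma lopen_id : lopen id.
Proof.
split; first by move=> x; exact: cvg_id.
by move=> x; exists setT; split; [exact: openT | by [] | move=> V oV _; rewrite image_id].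
Qed.

Lemma lopen_comp f g : lopen f -> lopen g -> lopen (f \o g).
Proof.
move=> [cf hf] [cg hg]; split.
  move=> x; apply: continuous_comp; [exact: cg | exact: cf].
move=> x; have [Ng [oNg Ngx hNg]] := hg x; have [Nf [oNf Nfx hNf]] := hf (g x).
exists (Ng `&` g @^-1` Nf); split.
- apply: openI => //; exact: preim_open.
- by split.
- move=> V oV VN; rewrite -image_comp; apply: hNf.
  + by apply: hNg => // y /VN [].
  + by move=> _ [y /VN [_ ?] <-].
Qed.

Lemma lopen_iter n f : lopen f -> lopen (iter n f).
Proof.
move=> lf; elim: n => [|n IH]; first exact: lopen_ext lopen_id.
exact: lopen_ext (lopen_comp lf IH).
Qed.

Lemma lopen_s i : lopen (s i).
Proof.
case: (slh i) => c h; split => // x; case: (h x) => U [oU Ux _ hU]; by exists U.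
Qed.

Lemma lopen_spow p : lopen (spow s p).
Proof.
rewrite /spow; elim: (enum 'I_k) => [|i l IH] /=; first exact: lopen_id.
exact: lopen_comp (lopen_iter _ (lopen_s i)) IH.
Qed.

Lemma Phi_cont (c : cochain X H k) : (forall n, continuous (c n)) -> cocycle_eq s c ->
  gpd_continuous (@PhiD X H k s c).
Proof.
move=> cc coc g W oW Wg.
case: (repP g); set p := (rep g).1; set q := (rep g).2 => Dg Eg.
move: Wg; rewrite /PhiD -/p -/q => Wg.
have [A [B [oA Aa oB Bb AB]]] := sub_open oW Wg.
have [cp hp] := lopen_spow p; have [Np [oNp Npx hNp]] := hp (gr g).
have [cq hq] := lopen_spow q; have [Nq [oNq Nqx hNq]] := hq (gs g).
set U1 := c p @^-1` A `&` Np.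
set V1 := c q @^-1` B `&` Nq.
have oU1 : open U1 by apply: openI => //; exact: preim_open.
have oV1 : open V1 by apply: openI => //; exact: preim_open.
set O := spow s p @` U1 `&` spow s q @` V1.
have oO : open O by apply: openI; [apply: hNp => //; exact: subIsetr | apply: hNq => //; exact: subIsetr].
have U1x : U1 (gr g) by split.
have V1y : V1 (gs g) by split.
have Oz : O (spow s p (gr g)) by split; [exists (gr g) | rewrite Eg; exists (gs g)].
exists (Zbasic s (U1 `&` spow s p @^-1` O) (V1 `&` spow s q @^-1` O) p q); split.
- exists (U1 `&` spow s p @^-1` O), (V1 `&` spow s q @^-1` O), p, q; split => //.
  + by apply: openI => //; exact: preim_open.
  + by apply: openI => //; exact: preim_open.
  + by rewrite !img_restr // => z [].
- by split => //; split => //; rewrite /preimage /= -Eg.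
- move=> h [[U1h _] [V1h _] Dh Eh].
  have := Phi_expl coc Dh Eh; rewrite /PhiD => ->.
  by apply: AB; [case: U1h | case: V1h].
Qed.

Lemma cof_cont (phi : Gpd s -> H) p : gpd_continuous phi -> continuous (cof phi p).
Proof.
move=> gc; apply/continuousP => W oW.
rewrite openE => x Wx.
have [Bs [[U [V [a [b [oU oV _ EB]]]]] Bg hB]] := gc (mkG s x p) W oW Wx.
move: Bg; rewrite EB => -[/= Ux Vx D _].
have Ea : a = vadd b p.
  have := diffv_add D; rewrite addvC => ->.
  by apply/funext => i; rewrite /Pilot.Defs.addv addn0.
rewrite /interior /= nbhsE; exists (U `&` spow s p @^-1` V).
  split; last by split.
  apply: openI => //; apply: preim_open => //; by case: (lopen_spow p).
move=> y [Uy Vy]; apply: hB; rewrite EB; split => //=.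
by rewrite Ea spow_add.
Qed.

Lemma B1_iff (c : cochain X H k) : cocycle_eq s c -> (B1 s c <-> B1cont (@PhiD X H k s c)).
Proof.
move=> coc; split.
- move=> [alpha [ca E]]; exists alpha; split => // g.
  case: (repP g) => D Eq; rewrite /PhiD !E Eq.
  by rewrite opprB addrA subrK.
- move=> [f [cf E]]; exists f; split => // n x.
  by rewrite -(Phi_mkG x n coc) E.
Qed.

End Top.

Section Main.
Variables (X : topologicalType) (H : topologicalZmodType) (k : nat) (s : 'I_k -> X -> X).
Hypothesis scomm : forall i j, s i \o s j = s j \o s i.
Hypothesis slh : forall i, local_homeo (s i).
Local Open Scope ring_scope.

Notation Phi := (@PhiD X H k s).

Lemma part1 (c : cochain X H k) : Z1 s c ->
  [/\ Z1cont (Phi c), on_generators (Phi c) c, explicit_formula (Phi c) c &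
      forall phi, Z1cont phi -> on_generators phi c -> phi = Phi c].
Proof.
move=> [cc coc]; split.
- split; [exact: Phi_hom | exact: Phi_cont].
- move=> g i x E.
  have D : gdeg g = vdiff (unitv i) zerov by rewrite /gdeg E.
  have Eq : spow s (unitv i) (gr g) = spow s zerov (gs g).
    by rewrite /gr /gs E /= spow_unit spow_zero.
  have := Phi_expl coc D Eq; rewrite /PhiD => ->.
  by rewrite (c_zero coc) subr0 /gr E.
- by move=> g m n; exact: Phi_expl.
- move=> phi [hom _] gen; apply/funext => g.
  case: (repP g) => D E.
  have U : forall p x, cof phi p x = c p x.
    apply: coc_unique => //; first exact: cof_cocycle.
    by move=> i x; rewrite /cof; apply: gen; rewrite /= spow_unit.
  by rewrite (hom_rep hom D E) /PhiD !U.
Qed.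

Lemma PhiD_sub (c c' : cochain X H k) g : Phi (subc c c') g = Phi c g - Phi c' g.
Proof.
rewrite /PhiD /subc !opprB addrACA [RHS]addrACA; congr (_ + _); exact: addrC.
Qed.

Lemma subc_coc (c c' : cochain X H k) : cocycle_eq s c -> cocycle_eq s c' ->
  cocycle_eq s (subc c c').
Proof. by move=> cc cc' m n x; rewrite /subc cc cc' opprD addrACA. Qed.

End Main.

Theorem corollary3p9 (R : realType) (X : metricType R) (H : topologicalZmodType)
  (k : nat) (s : 'I_k -> X -> X) :
  compact [set: X] ->
  locally_compact [set: H] -> hausdorff_space H ->
  (forall i j, s i \o s j = s j \o s i) ->
  (forall i y, exists x, s i x = y) ->
  (forall i, local_homeo (s i)) ->
  exists Phi : cochain X H k -> (Gpd s -> H),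
    (* well-defined: Phi(c) is the unique continuous groupoid cocycle with the
       prescribed values on the generators, and is given by the explicit formula *)
    (forall c, Z1 s c ->
       [/\ Z1cont (Phi c), on_generators (Phi c) c, explicit_formula (Phi c) c &
           forall phi, Z1cont phi -> on_generators phi c -> phi = Phi c]) /\
    (* group homomorphism *)
    (forall c c', Z1 s c -> Z1 s c' ->
       Phi (addc c c') = (fun g => (Phi c g + Phi c' g)%R)) /\
    (* injective *)
    (forall c c', Z1 s c -> Z1 s c' -> Phi c = Phi c' -> c = c') /\
    (* surjective *)
    (forall phi, Z1cont phi -> exists2 c, Z1 s c & Phi c = phi) /\
    (* restricts to an isomorphism B^1 ~= B^1_cont *)
    (forall c, Z1 s c -> (B1 s c <-> B1cont (Phi c))) /\
    (* induced map H^1 -> H^1_cont is well defined and injective on classes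
       (surjectivity on classes follows from surjectivity above) *)
    (forall c c', Z1 s c -> Z1 s c' ->
       (B1 s (subc c c') <-> B1cont (fun g => (Phi c g - Phi c' g)%R))).
Proof.
move=> _ _ _ scomm _ slh.
exists (@PhiD X H k s); split; first exact: part1.
split.
  move=> c c' _ _; apply/funext => g.
  by rewrite /PhiD /addc opprD addrACA.
split.
  move=> c c' [_ coc] [_ coc'] E; apply/funext => p; apply/funext => x.
  by rewrite -(Phi_mkG x p coc) -(Phi_mkG x p coc') E.
split.
  move=> phi [hom cont]; exists (cof phi).
    by split; [move=> p; exact: cof_cont | exact: cof_cocycle].
  have [_ _ _ U] := @part1 _ _ _ _ scomm slh (cof phi)
     (conj (fun p => @cof_cont _ _ _ _ scomm slh phi p cont) (cof_cocycle scomm hom)).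
  apply/esym/U; first by split.
  move=> g i x E; rewrite /cof; congr phi; apply: gpd_eq.
  by rewrite E /= spow_unit.
split.
  by move=> c [_ coc]; exact: B1_iff.
move=> c c' [_ coc] [_ coc'].
have -> : (fun g => (@PhiD X H k s c g - @PhiD X H k s c' g)%R) = @PhiD X H k s (subc c c').
  by apply/funext => g; rewrite PhiD_sub.
apply: B1_iff; exact: subc_coc.
Qed.
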